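(* Let $K$ be a number field and let $A=A_1\cdots A_n$ with $A_1,\ldots,A_n\in M_d(K)$. Suppose there exists $r\ge0$ such that $\operatorname{rank}(A)=\operatorname{rank}(A_iA_{i+1})=r$ for all $i\in[1,n-1]$. (1) There exists a subproduct $A'\coloneqq A_{i_1}\cdots A_{i_k}$ with $1=i_1<i_2<\cdots<i_{k-1}<i_k=n$ such that $A\parallel A'$ and $k\le\binom{d}{r}+3$. (2) If $n\ge 2\binom{d}{r}+4$, then there are $1\le k<l\le n$ such that $A_k\cdots A_l$ is completely pseudo-regular of rank $r$.
   Context: For $A,B\in M_d(K)$, write $A\parallel B$ if $\operatorname{im}(A)=\operatorname{im}(B)$ and $\ker(A)=\ker(B)$. A matrix is completely pseudo-regular if it is contained in a subgroup of the multiplicative semigroup $M_d(K)$; equivalently, $\operatorname{im}(C)\cap\ker(C)=0$. *)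

(* Defs.v *)
From HB Require Import structures.
From mathcomp Require Import all_boot all_order all_algebra all_field.
Set Implicit Arguments. Unset Strict Implicit. Unset Printing Implicit Defensive.
Import GRing.Theory.
Local Open Scope ring_scope.

(* Matrices act on COLUMN vectors: im A = {A x}, ker A = {x | A x = 0}.
   In mathcomp's row-vector conventions, im A is the row space of A^T and
   ker A is the row space of kermx A^T. *)

Definition mxprod (F : fieldType) (d : nat) (s : seq 'M[F]_d) : 'M[F]_d :=
  foldr (@mulmx F d d d) 1%:M s.

(* A_k A_(k+1) ... A_l  (indices k..l inclusive) *)
Definition subprod (F : fieldType) (d : nat) (A : nat -> 'M[F]_d) (k l : nat) :
  'M[F]_d := mxprod [seq A i | i <- iota k (l.+1 - k)].

Definition mx_im (F : fieldType) (d : nat) (A : 'M[F]_d) : 'M[F]_d := A^T.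
Definition mx_ker (F : fieldType) (d : nat) (A : 'M[F]_d) : 'M[F]_d := kermx A^T.

Definition mx_parallel (F : fieldType) (d : nat) (A B : 'M[F]_d) : Prop :=
  (mx_im A == mx_im B)%MS /\ (mx_ker A == mx_ker B)%MS.

Definition completely_pseudo_regular (F : fieldType) (d : nat) (C : 'M[F]_d) : Prop :=
  (mx_im C :&: mx_ker C == (0 : 'M[F]_d))%MS.

(* Main.v *)
Require Import Defs.
From HB Require Import structures.
From mathcomp Require Import all_boot all_order all_algebra all_field.
From mathcomp Require Import perm zify.
Import GRing.Theory.
Local Open Scope ring_scope.

Lemma scb (F : fieldType) (r d : nat) (X : 'M[F]_(r,d)) (Y : 'M[F]_(d,r)) :
  \det (X *m Y) = \sum_(c : {ffun 'I_r -> 'I_d})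
                     (\prod_i X i (c i)) * \det (rowsub c Y).
Proof.
rewrite /determinant.
have E (s : {perm 'I_r}) : \prod_i (X *m Y) i (s i) =
    \sum_(c : {ffun 'I_r -> 'I_d}) \prod_i (X i (c i) * Y (c i) (s i)).
  under eq_bigr do rewrite mxE.

  by rewrite bigA_distr_bigA.
under eq_bigr => s _ do rewrite E mulr_sumr.
under [RHS]eq_bigr => c _ do rewrite mulr_sumr.
rewrite [RHS]exchange_big /=; apply: eq_bigr => s _.
under eq_bigr => c _ do rewrite big_split /= mulrCA.
under [RHS]eq_bigr => c _.
  rewrite [Z in _ * (_ * Z)](eq_bigr (fun i => Y (c i) (s i))); last by move=> i _; rewrite mxE.
  over.
reflexivity.
Qed.

Notation Jt r d := {ffun 'I_r -> 'I_d}.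
Notation Dn r d := #|{: Jt r d}|.
Definition ev (r d : nat) (a : 'I_(Dn r d)) : 'I_r -> 'I_d :=
  fun i => (enum_val a : Jt r d) i.
Arguments ev {r d} a i.
Definition Lam (F : fieldType) (r d : nat) (M : 'M[F]_d) : 'M[F]_(Dn r d) :=
  \matrix_(a, b) \det (mxsub (ev a) (ev b) M).
Arguments Lam {F} r {d} M.
Definition Tm (F : fieldType) (r d : nat) (Q : 'M[F]_d) : 'M[F]_(Dn r d) :=
  \matrix_(a, c) \prod_i Q (ev a i) (ev c i).
Arguments Tm {F} r {d} Q.

Lemma sum_J (F : fieldType) (r d : nat) (G : Jt r d -> F) :
  \sum_(c : Jt r d) G c = \sum_(i < Dn r d) G (enum_val i).
Proof. by rewrite -big_enum_val; apply: eq_bigl => c; rewrite inE. Qed.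

Lemma LamM (F : fieldType) (r d : nat) (Q P : 'M[F]_d) :
  Lam r (Q *m P) = Tm r Q *m Lam r P.
Proof.
apply/matrixP => a b; rewrite !mxE mxsub_mul scb sum_J.
apply: eq_bigr => c _; rewrite !mxE -mxsubrc.
congr (_ * _); apply: eq_bigr => i _; by rewrite mxE.
Qed.

Lemma mxsub_rank (F : fieldType) m n m' n' (f : 'I_m' -> 'I_m) (g : 'I_n' -> 'I_n) (M : 'M[F]_(m,n)) :
  (\rank (mxsub f g M) <= \rank M)%N.
Proof.
rewrite mxsubrc; apply: (leq_trans (mxrankS (rowsub_sub _ _))).
have -> : colsub g M = M *m colsub g 1%:M by rewrite mulmx_colsub mulmx1.
exact: mxrankM_maxl.
Qed.

Lemma Lam_rank_le (F : fieldType) r d (M : 'M[F]_d) : Lam r M != 0 -> (r <= \rank M)%N.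
Proof.
move=> nz; case: (leqP r (\rank M)) => // H; exfalso; move/eqP: nz; apply.
apply/matrixP => a b; rewrite !mxE; apply/eqP; apply: contraTT H => nz.
rewrite -leqNgt; apply: (@leq_trans (\rank (mxsub (ev a) (ev b) M))); last exact: mxsub_rank.
by rewrite mxrank_unit // unitmxE unitfE.
Qed.

Lemma Lam_rank_ge (F : fieldType) r d (M : 'M[F]_d) : (r <= \rank M)%N -> Lam r M != 0.
Proof.
move=> H.
pose f : 'I_r -> 'I_d := fun i => maxrankfun M (widen_ord H i).
pose B := rowsub f M.
have rB : \rank B = r.
  rewrite /B (_ : f = maxrankfun M \o widen_ord H) // rowsub_comp rowsubE.
  rewrite -pid_mxErow mxrankMfree ?maxrowsub_free //.
  by rewrite rank_pid_mx.
have eqR : \rank B^T = r by rewrite mxrank_tr.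
pose h : 'I_r -> 'I_d := fun i => maxrankfun B^T (cast_ord (esym eqR) i).
pose C := rowsub h B^T.
have rC : \rank C = r.
  rewrite /C (_ : h = maxrankfun B^T \o cast_ord (esym eqR)) //.
  rewrite (eqmx_rowsub_comp (maxrankfun B^T) B^T _ (@cast_ord_inj _ _ (esym eqR))) ?eqR //.
  by move: (maxrowsub_free B^T); rewrite /row_free => /eqP ->.
have dC : \det (mxsub f h M) != 0.
  rewrite -det_tr trmx_mxsub -unitfE -unitmxE -row_free_unit /row_free.
  have -> : mxsub h f M^T = C by rewrite /C /B trmx_mxsub mxsubrc.
  by rewrite rC.
pose a : 'I_(Dn r d) := enum_rank [ffun i => f i].
pose b : 'I_(Dn r d) := enum_rank [ffun i => h i].
have E : mxsub (ev a) (ev b) M = mxsub f h M.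
  by apply: eq_mxsub => i; rewrite /ev /a /b enum_rankK ffunE.
apply/eqP => Z; move: dC; have := congr1 (fun X : 'M[F]_(Dn r d) => X a b) Z.
by rewrite !mxE E => ->; rewrite eqxx.
Qed.

Definition rep (d r : nat) (rd : (r <= d)%N) (S : {set 'I_d}) : 'I_r -> 'I_d :=
  fun j => nth (widen_ord rd j) (enum S) j.
Arguments rep {d r} rd S j.

Lemma rep_in {d r} (rd : (r <= d)%N) {S : {set 'I_d}} (j : 'I_r) : #|S| = r -> rep rd S j \in S.
Proof. by move=> cS; rewrite /rep -mem_enum mem_nth // -cardE cS. Qed.

Lemma rep_inj {d r} (rd : (r <= d)%N) {S : {set 'I_d}} : #|S| = r -> injective (rep rd S).
Proof.
move=> cS j k; rewrite /rep => E; apply/val_inj/eqP.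
have [jl kl] : (j < size (enum S))%N /\ (k < size (enum S))%N by rewrite -cardE cS.
move: E; set x0 := widen_ord rd j; set y0 := widen_ord rd k.
rewrite (set_nth_default x0 _ kl) => /eqP.
by rewrite nth_uniq // enum_uniq.
Qed.

Lemma rep_surj {d r} (rd : (r <= d)%N) {S : {set 'I_d}} x : #|S| = r -> x \in S -> exists j, rep rd S j = x.
Proof.
move=> cS xS; have il : (index x (enum S) < r)%N by rewrite -cS cardE index_mem mem_enum.
exists (Ordinal il); by rewrite /rep /= nth_index // mem_enum.
Qed.

Definition dlt (F : fieldType) (r d : nat) (f g : 'I_r -> 'I_d) : 'M[F]_r :=
  \matrix_(i, k) ((f i == g k)%:R).
Arguments dlt F {r d} f g.

Lemma dlt_mul (F : fieldType) {d r} (rd : (r <= d)%N) (S : {set 'I_d}) (f h : 'I_r -> 'I_d) (P : 'M[F]_d) :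
  #|S| = r -> (forall i, f i \in S) ->
  dlt F f (rep rd S) *m mxsub (rep rd S) h P = mxsub f h P.
Proof.
move=> cS fS; apply/matrixP => i j; rewrite !mxE.
have [k0 Ek0] := rep_surj rd _ cS (fS i).
rewrite (bigD1 k0) //= big1 ?addr0.
  by rewrite !mxE Ek0 eqxx mul1r.
move=> k nk; rewrite !mxE; case: eqP => [E|]; last by rewrite mul0r.
by move: nk; rewrite -Ek0 in E; rewrite (rep_inj rd cS _ _ E) eqxx.
Qed.

Lemma dlt_zero (F : fieldType) {d r} (rd : (r <= d)%N) (S : {set 'I_d}) (f : 'I_r -> 'I_d) i :
  #|S| = r -> f i \notin S -> \det (dlt F f (rep rd S)) = 0.
Proof.
move=> cS fi; rewrite (expand_det_row _ i) big1 // => k _; rewrite mxE.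
case: eqP => [E|]; last by rewrite mul0r.
by move: fi; rewrite E rep_in.
Qed.

Definition Sr d r : {set {set 'I_d}} := [set S : {set 'I_d} | #|S| == r].

Lemma det_expand (F : fieldType) {d r} (rd : (r <= d)%N) (f h : 'I_r -> 'I_d) (P : 'M[F]_d) :
  \det (mxsub f h P) =
  \sum_(S in Sr d r) \det (dlt F f (rep rd S)) * \det (mxsub (rep rd S) h P).
Proof.
have term S : S \in Sr d r -> \det (dlt F f (rep rd S)) * \det (mxsub (rep rd S) h P)
   = if [forall i, f i \in S] then \det (mxsub f h P) else 0.
  rewrite inE => /eqP cS; case: ifP => [/forallP fS|/negbT/forallPn [i fi]].
    by rewrite -det_mulmx dlt_mul.
  by rewrite (dlt_zero F rd _ _ _ cS fi) mul0r.
case: (boolP (injectiveb f)) => [/injectiveP finj|/injectivePn [i1 [i2 ni fe]]].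
  pose S0 := [set f i | i in 'I_r].
  have cS0 : #|S0| = r by rewrite card_imset // card_ord.
  have S0in : S0 \in Sr d r by rewrite inE cS0.
  rewrite (bigD1 S0) //= term //.
  have -> : [forall i, f i \in S0] by apply/forallP => i; exact: imset_f.
  rewrite big1 ?addr0 // => S /andP [Sin nS]; rewrite term //.
  case: forallP => // fS; exfalso; move: nS; rewrite eq_sym eqEcard.
  move: Sin; rewrite inE => /eqP ->; rewrite cS0 leqnn andbT.
  by apply/negP/negPn/subsetP => x /imsetP [i _ ->].
have z : \det (mxsub f h P) = 0.
  apply: (determinant_alternate ni) => j; by rewrite !mxE fe.
rewrite z big1 // => S Sin; rewrite term //; by case: ifP.
Qed.

Definition Emx (F : fieldType) d r (rd : (r <= d)%N) : 'M[F]_(#|Sr d r|, Dn r d) :=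
  \matrix_(s, a) \det (dlt F (ev a) (rep rd (enum_val s))).
Arguments Emx F {d r} rd.

Lemma Lam_sub (F : fieldType) {d r} (rd : (r <= d)%N) (P : 'M[F]_d) :
  ((Lam r P)^T <= Emx F rd)%MS.
Proof.
pose W : 'M[F]_(Dn r d, #|Sr d r|) :=
  \matrix_(b, s) \det (mxsub (rep rd (enum_val s)) (ev b) P).
have -> : (Lam r P)^T = W *m Emx F rd.
  apply/matrixP => b a; rewrite !mxE (det_expand F rd) big_enum_val.
  apply: eq_bigr => s _; by rewrite !mxE mulrC.
exact: submxMl.
Qed.

Lemma rank_Emx (F : fieldType) {d r} (rd : (r <= d)%N) : (\rank (Emx F rd) <= 'C(d, r))%N.
Proof. by apply: leq_trans (rank_leq_row _) _; rewrite card_draws card_ord. Qed.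

Lemma sum_range_sub (F : fieldType) (D p : nat) (B : 'M[F]_(p, D)) (X : nat -> 'M[F]_D) a b :
  (forall j, (a <= j < b)%N -> (X j <= B)%MS) ->
  ((\sum_(a <= j < b) X j)%MS <= B)%MS.
Proof.
move=> H; rewrite big_seq_cond; apply: (big_ind (fun A : 'M[F]_D => (A <= B)%MS)).
- exact: sub0mx.
- by move=> x y Hx Hy; rewrite addsmx_sub Hx Hy.
- by move=> j /andP [jin _]; apply: H; rewrite -mem_index_iota.
Qed.

Lemma chain (F : fieldType) (D p : nat) (Z : 'M[F]_(p, D)) (m : nat) (X Y : nat -> 'M[F]_D) :
  (forall j, (j < m)%N -> (X j <= Z)%MS) ->
  (forall i, (i < m)%N -> X i *m Y i != 0) ->
  (forall i j, (i < j < m)%N -> X j *m Y i = 0) ->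
  (m <= \rank Z)%N.
Proof.
move=> XZ nz kill.
pose U i := (\sum_(i <= j < m) X j)%MS.
have step k : forall i, (i + k = m)%N -> (k <= \rank (U i))%N.
  elim: k => [//|k IH] i Hik.
  have im : (i < m)%N by rewrite -Hik addnS ltnS leq_addr.
  have -> : U i = (X i + U i.+1)%MS by rewrite /U big_ltn.
  have Uker : (U i.+1 <= kermx (Y i))%MS.
    apply: sum_range_sub => j /andP [ij jm]; apply/sub_kermxP.
    by apply: kill; rewrite ij jm.
  have nX : ~~ (X i <= U i.+1)%MS.
    apply/negP => XU.
    have : X i *m Y i = 0 by apply/sub_kermxP; exact: submx_trans XU Uker.
    by move/eqP; rewrite (negbTE (nz i im)).
  have := mxrank_leqif_sup (addsmxSr (X i) (U i.+1)).
  move/ltn_leqif; rewrite addsmx_sub submx_refl andbT nX => lt.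
  apply: leq_trans lt; rewrite ltnS; apply: IH; by rewrite addSnnS.
apply: leq_trans (step m 0 (add0n m)) _.
by apply: mxrankS; apply: sum_range_sub => j /andP [_ jm]; apply: XZ.
Qed.

Lemma pairs_bound (F : fieldType) (d r : nat) (rd : (r <= d)%N) (m : nat) (Q P : nat -> 'M[F]_d) :
  (forall i, (i < m)%N -> (r <= \rank (Q i *m P i))%N) ->
  (forall i j, (i < j < m)%N -> (\rank (Q i *m P j) < r)%N) ->
  (m <= 'C(d, r))%N.
Proof.
move=> dg off; apply: leq_trans (rank_Emx F rd).
apply: (@chain F _ _ (Emx F rd) m (fun j => (Lam r (P j))^T) (fun i => (Tm r (Q i))^T)).
- by move=> j _; exact: Lam_sub.
- move=> i im; rewrite -trmx_mul -LamM trmx_eq0; exact: Lam_rank_ge (dg i im).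
- move=> i j ijm; rewrite -trmx_mul -LamM; apply/eqP; rewrite trmx_eq0.
  apply: contraTT (off i j ijm) => /Lam_rank_le; by rewrite -leqNgt.
Qed.

Lemma mxprod_cat (F : fieldType) d (s1 s2 : seq 'M[F]_d) :
  mxprod (s1 ++ s2) = mxprod s1 *m mxprod s2.
Proof. elim: s1 => [|a s1 IH] /=; first by rewrite mul1mx. by rewrite IH mulmxA. Qed.

Lemma subprod_split (F : fieldType) d (A : nat -> 'M[F]_d) k m l :
  (k <= m.+1)%N -> (m <= l)%N ->
  subprod A k l = subprod A k m *m subprod A m.+1 l.
Proof.
move=> km ml; rewrite /subprod -mxprod_cat -map_cat.
have -> : (l.+1 - k = (m.+1 - k) + (l.+1 - m.+1))%N by lia.
by rewrite iotaD; congr (mxprod (map A (_ ++ iota _ _))); lia.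
Qed.

Lemma subprod_pair (F : fieldType) d (A : nat -> 'M[F]_d) k :
  subprod A k k.+1 = A k *m A k.+1.
Proof. rewrite /subprod (_ : (k.+2 - k = 2)%N); last by lia. by rewrite /= mulmx1. Qed.

Lemma rankR1 (F : fieldType) d (X Q M : 'M[F]_d) :
  \rank (X *m Q) = \rank Q -> \rank (X *m Q *m M) = \rank (Q *m M).
Proof.
move=> e; have sub := submxMl X Q.
have eq : (X *m Q == Q)%MS by move: (mxrank_leqif_eq sub) => [_ <-]; rewrite e eqxx.
by apply: eqmx_rank; apply/eqmxP; apply: eqmxMr; apply/eqmxP.
Qed.

Lemma rankR2 (F : fieldType) d (M P Y : 'M[F]_d) :
  \rank (P *m Y) = \rank P -> \rank (M *m P *m Y) = \rank (M *m P).
Proof.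
move=> e; rewrite -mxrank_tr trmx_mul trmx_mul -[in RHS]mxrank_tr trmx_mul.
rewrite mulmxA rankR1 //; by rewrite -trmx_mul !mxrank_tr.
Qed.

Lemma cpr_of (F : fieldType) (d r : nat) (C : 'M[F]_d) :
  \rank C = r -> (r <= \rank (C *m C))%N -> completely_pseudo_regular C.
Proof.
move=> rC h; rewrite /completely_pseudo_regular /mx_im /mx_ker.
have := mxrank_mul_ker C^T C^T; rewrite -trmx_mul !mxrank_tr rC => E.
have z : \rank (C^T :&: kermx C^T)%MS = 0%N.
  by apply/eqP; move: h; rewrite -E -{2}[\rank (C *m C)]addn0 leq_add2l leqn0.
apply/andP; split; last exact: sub0mx.
by rewrite submx0 -mxrank_eq0 z.
Qed.

Lemma im_eq (F : fieldType) (d r : nat) (G X H : 'M[F]_d) :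
  \rank G = r -> (r <= \rank (G *m X *m H))%N -> ((G *m X *m H)^T == G^T)%MS.
Proof.
move=> rG h.
have sub : ((G *m X *m H)^T <= G^T)%MS by rewrite !trmx_mul mulmxA submxMl.
move: (mxrank_leqif_eq sub) => [_ <-]; apply/eqP.
rewrite !mxrank_tr rG; apply/anti_leq; rewrite h andbT -rG.
by apply: leq_trans (mxrankM_maxl _ _) _; exact: mxrankM_maxl.
Qed.

Lemma ker_eq (F : fieldType) (d r : nat) (G X H : 'M[F]_d) :
  \rank H = r -> (r <= \rank (G *m X *m H))%N -> (kermx H^T == kermx (G *m X *m H)^T)%MS.
Proof.
move=> rH h.
have sub : (kermx H^T <= kermx (G *m X *m H)^T)%MS.
  apply/sub_kermxP; rewrite trmx_mul mulmxA (sub_kermxP (submx_refl _)) mul0mx //.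
move: (mxrank_leqif_eq sub) => [_ <-]; apply/eqP.
rewrite !mxrank_ker !mxrank_tr rH; congr (_ - _)%N; apply/anti_leq.
by rewrite h /= -rH mxrankM_maxr.
Qed.

Lemma par_of (F : fieldType) (d r : nat) (G X Y H : 'M[F]_d) :
  \rank G = r -> \rank H = r ->
  (r <= \rank (G *m X *m H))%N -> (r <= \rank (G *m Y *m H))%N ->
  mx_parallel (G *m X *m H) (G *m Y *m H).
Proof.
move=> rG rH hX hY; rewrite /mx_parallel /mx_im /mx_ker; split.
  apply/eqmxP; apply: eqmx_trans (eqmxP (@im_eq F d r G X H rG hX)) (eqmx_sym (eqmxP (@im_eq F d r G Y H rG hY))).
apply/eqmxP; apply: eqmx_trans (eqmx_sym (eqmxP (@ker_eq F d r G X H rH hX))) (eqmxP (@ker_eq F d r G Y H rH hY)).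
Qed.

Lemma rank_block (F : fieldType) (d n r : nat) (A : nat -> 'M[F]_d) :
  \rank (subprod A 1 n) = r ->
  (forall i : nat, (1 <= i < n)%N -> \rank (A i *m A i.+1) = r) ->
  forall k l, (1 <= k)%N -> (k < l)%N -> (l <= n)%N -> \rank (subprod A k l) = r.
Proof.
move=> hA hP k l k1 kl ln; apply/anti_leq/andP; split.
  rewrite (@subprod_split F d A k k.+1 l) //; last by lia.
  apply: leq_trans (mxrankM_maxl _ _) _; rewrite subprod_pair hP //; lia.
rewrite -{1}hA (@subprod_split F d A 1 k.-1 n) //; try lia.
apply: leq_trans (mxrankM_maxr _ _) _; rewrite prednK //.
rewrite (@subprod_split F d A k l n) //; try lia.
exact: mxrankM_maxl.
Qed.

Lemma sq_iota k : [:: 1, 2 & iota 3 k ++ [:: k.+3; k.+4]]%N = iota 1 k.+4.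
Proof.
rewrite (_ : iota 1 k.+4 = [:: 1, 2 & iota 3 (k + 2)])%N; last by rewrite addn2.
rewrite iotaD; have -> : (3 + k = k.+3)%N by lia.
done.
Qed.

Lemma part1 (F : fieldType) (d n r : nat) (A : nat -> 'M[F]_d) :
  (4 <= n)%N -> (r <= d)%N ->
  \rank (subprod A 1 n) = r ->
  (forall i : nat, (1 <= i < n)%N -> \rank (A i *m A i.+1) = r) ->
  exists s : seq nat,
      [/\ sorted ltn s, head 0%N s = 1%N, last 0%N s = n,
          mx_parallel (subprod A 1 n) (mxprod [seq A i | i <- s])
        & (size s <= 'C(d, r) + 3)%N].
Proof.
move=> n4 rd hA hP.
pose G := A 1%N *m A 2%N; pose H := A n.-1 *m A n.
pose sq (t : seq nat) := [:: 1, 2 & t ++ [:: n.-1; n]]%N.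
pose Mt (t : seq nat) := mxprod [seq A i | i <- t].
have Msq t : mxprod [seq A i | i <- sq t] = G *m Mt t *m H.
  by rewrite /= map_cat mxprod_cat /= mulmx1 !mulmxA.
pose good t := [&& sorted ltn t, all (fun x => 2 < x < n.-1)%N t
                 & (r <= \rank (G *m Mt t *m H))%N].
have rG : \rank G = r by rewrite hP //; lia.
have rH : \rank H = r.
  have := hP n.-1; rewrite prednK; last by lia.
  by apply; lia.
have shrink k : forall t, (size t <= k)%N -> good t ->
    exists t', good t' && (size t' < 'C(d, r))%N.
  elim: k => [|k IH] t st gt.
    exists t; rewrite gt /=; move: st; rewrite leqn0 => /eqP ->; by rewrite bin_gt0.
  case: (ltnP (size t) 'C(d, r)) => [lt|ge]; first by exists t; rewrite gt lt.
  pose m := (size t).+1.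
  pose Q i := G *m Mt (take i t); pose P j := Mt (drop j t) *m H.
  have QP i j : Q i *m P j = G *m Mt (take i t ++ drop j t) *m H.
    by rewrite /Q /P /Mt map_cat mxprod_cat !mulmxA.
  case: (boolP [exists i : 'I_m, exists j : 'I_m, (i < j)%N && (r <= \rank (Q i *m P j))%N]).
    move=> /existsP [i /existsP [j /andP [ij hr]]].
    have jm : (j <= size t)%N by rewrite -ltnS.
    apply: (IH (take i t ++ drop j t)).
      rewrite size_cat size_drop size_takel; lia.
    move: gt => /and3P [srt al _]; apply/and3P; split.
    - apply: (subseq_sorted ltn_trans _ srt).
      rewrite -[X in subseq _ X](cat_take_drop i t); apply: cat_subseq => //.
      rewrite (_ : nat_of_ord j = (j - i) + i)%N; last by lia.
      by rewrite -drop_drop drop_subseq.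
    - move/allP: al => al; apply/allP => x; rewrite mem_cat => /orP [/mem_take|/mem_drop];
        exact: al.
    - by rewrite -QP.
  move=> none; exfalso.
  have : (m <= 'C(d, r))%N.
    apply: (@pairs_bound F d r rd m Q P).
      move=> i im; rewrite QP cat_take_drop; by case/and3P: gt.
    move=> i j /andP [ij jm]; rewrite ltnNge; apply/negP => hr; move/negP: none; apply.
    apply/existsP; exists (Ordinal (ltn_trans ij jm)); apply/existsP; exists (Ordinal jm).
    by rewrite /= ij hr.
  rewrite /m; lia.
pose t0 := iota 3 (n - 4)%N.
have e0 : sq t0 = iota 1 n.
  have [k nk] : exists k, n = k.+4 by exists (n - 4)%N; lia.
  rewrite /sq /t0 nk (_ : (k.+4 - 4 = k)%N); last by lia.
  exact: sq_iota.
have sub1n : subprod A 1 n = G *m Mt t0 *m H.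
  by rewrite -Msq e0 /subprod subSS subn0.
have g0 : good t0.
  apply/and3P; split.
  - exact: iota_ltn_sorted.
  - apply/allP => x; rewrite mem_iota => /andP [h1 h2]; apply/andP; split; lia.
  - by rewrite -sub1n hA.
have [t' /andP [gt' st']] := shrink _ t0 (leqnn _) g0.
case/and3P: gt' => srt al hr.
exists (sq t'); split => //.
- rewrite /sq /= cat_path /= (path_sortedE ltn_trans) srt andbT.
  have l2 : (2 < n.-1)%N by lia.
  have ln : (n.-1 < n)%N by lia.
  rewrite ln !andbT.
  apply/andP; split.
    by move/allP: al => al; apply/allP => x /al /andP [].
  have := mem_last 2%N t'; rewrite inE => /orP [/eqP -> //| /(allP al) /andP [_ ->]] //.
- by rewrite /sq -!cat_cons last_cat.
- rewrite sub1n Msq; apply: par_of rG rH _ hr; by rewrite -sub1n hA.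
- rewrite /sq /= size_cat /=; lia.
Qed.

Lemma part2 (F : fieldType) (d n r : nat) (A : nat -> 'M[F]_d) :
  (r <= d)%N ->
  \rank (subprod A 1 n) = r ->
  (forall i : nat, (1 <= i < n)%N -> \rank (A i *m A i.+1) = r) ->
  (2 * 'C(d, r) + 4 <= n)%N ->
   exists k l : nat,
     [/\ (1 <= k)%N, (k < l)%N, (l <= n)%N,
         completely_pseudo_regular (subprod A k l)
       & \rank (subprod A k l) = r].
Proof.
move=> rd hA hP nbig.
have rb := @rank_block F d n r A hA hP.
case: (boolP [exists k : 'I_n.+1, exists l : 'I_n.+1,
   [&& (1 <= k)%N, (k < l)%N & (r <= \rank (subprod A k l *m subprod A k l))%N]]).
  move=> /existsP [k /existsP [l /and3P [k1 kl hr]]].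
  have ln : (l <= n)%N by rewrite -ltnS.
  exists k, l; split => //; last exact: rb.
  by apply: cpr_of hr; exact: rb.
move=> none; exfalso.
have noCC k l : (1 <= k)%N -> (k < l)%N -> (l <= n)%N ->
    (\rank (subprod A k l *m subprod A k l) < r)%N.
  move=> k1 kl ln; rewrite ltnNge; apply/negP => hr; move/negP: none; apply.
  have kn : (k < n.+1)%N by lia.
  have ln' : (l < n.+1)%N by lia.
  apply/existsP; exists (Ordinal kn); apply/existsP; exists (Ordinal ln').
  by rewrite /= k1 kl hr.
set N := 'C(d, r) in nbig.
pose p t := (2 * (N - t) + 2)%N.
pose Q t := subprod A (p t).-1 (p t).
pose P t := subprod A (p t).+1 (p t).+2.
have : (N.+1 <= N)%N; last by rewrite ltnn.
apply: (@pairs_bound F d r rd N.+1 Q P).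
  move=> i iN; rewrite /Q /P -subprod_split; try lia.
  rewrite rb //; rewrite /p; lia.
move=> i j /andP [ij jN].
set a := p j; set b := p i.
have ab : (a.+2 <= b)%N by rewrite /a /b /p; lia.
have bn : (b <= n)%N by rewrite /b /p; lia.
have e1 : subprod A a.+1 b = subprod A a.+1 (b - 2) *m Q i.
  rewrite /Q -/b (_ : b.-1 = (b - 2).+1)%N; last by lia.
  by rewrite -subprod_split //; lia.
have e2 : subprod A a.+1 b = P j *m subprod A a.+3 b.
  by rewrite /P -/a -subprod_split //; lia.
have rC : \rank (subprod A a.+1 b) = r by rewrite rb //; lia.
have rQ : \rank (Q i) = r by rewrite /Q rb //; rewrite /b /p; lia.
have rP : \rank (P j) = r by rewrite /P rb //; rewrite /a /p; lia.
have := noCC a.+1 b isT ab bn.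
rewrite {1}e1 {1}e2 rankR1; last by rewrite -e1 rC rQ.
by rewrite mulmxA rankR2 // -e2 rC rP.
Qed.

Theorem lemmaV10 (K : fieldExtType rat) (d n r : nat) (A : nat -> 'M[K]_d) :
  (0 < n)%N ->
  \rank (subprod A 1 n) = r ->
  (forall i : nat, (1 <= i < n)%N -> \rank (A i *m A i.+1) = r) ->
  (exists s : seq nat,
      [/\ sorted ltn s, head 0%N s = 1%N, last 0%N s = n,
          mx_parallel (subprod A 1 n) (mxprod [seq A i | i <- s])
        & (size s <= 'C(d, r) + 3)%N])
  /\
  ((2 * 'C(d, r) + 4 <= n)%N ->
   exists k l : nat,
     [/\ (1 <= k)%N, (k < l)%N, (l <= n)%N,
         completely_pseudo_regular (subprod A k l)
       & \rank (subprod A k l) = r]).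
Proof.
move=> n0 hA hP.
have rd : (r <= d)%N by rewrite -hA rank_leq_row.
split; last exact: part2.
case: (leqP 4 n) => n4; first exact: part1.
exists (iota 1 n); split.
- exact: iota_ltn_sorted.
- by case: n n0 n4 {hA hP}.
- by case: n n0 n4 {hA hP} => [|[|[|[|n]]]].
- by rewrite /subprod subSS subn0; split; rewrite submx_refl.
- rewrite size_iota; lia.
Qed.
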